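(* Let $Y/X$ be a Galois cover of finite digraphs with abelian Galois group $G=\mathrm{Gal}(Y/X)$, and let $F$ be an algebraically closed field of characteristic zero. Then $$g_Y(u)=g_X(u)\prod_{\substack{\psi\in\widehat G(F)\\ \psi\neq\psi_0}}g_{Y/X}(u,\psi).$$
   Context: Digraph $X=(V_X,E_X)$ with incidence $e\mapsto(o(e),t(e))$; strongly connected means a directed path exists between any two distinct vertices. A cover $f:Y\to X$ is a morphism surjective on vertices and bijective from edges with origin $w$ (resp. terminus $w$) onto edges with origin $f(w)$ (resp. terminus $f(w)$) for each $w\in V_Y$. $\mathrm{Aut}(Y/X)$ is the group of digraph automorphisms $\sigma$ of $Y$ with $f\circ\sigma=f$; the cover is Galois if $X,Y$ are strongly connected and $\mathrm{Aut}(Y/X)$ acts transitively on each fibre $f^{-1}(v)$, and then $\mathrm{Gal}(Y/X)=\mathrm{Aut}(Y/X)$; it acts freely on $V_Y$. $\mathcal{A}_Y(w)=\sum_{o(\varepsilon)=w}t(\varepsilon)$; $g_Y(u)=\det(\mathcal{I}-\mathcal{A}_Yu)$, similarly $g_X$. $\gamma_{Y/X}(u)=\det_{\mathbb{Z}[G][u]}(\mathcal{I}-\mathcal{A}_Yu)$, computed on the free $\mathbb{Z}[G][u]$-module $\mathbb{Z}V_Y[u]$. $\widehat G(F)=\mathrm{Hom}(G,F^\times)$, $\psi_0$ the trivial character, and $g_{Y/X}(u,\psi)\in F[u]$ is obtained by applying $\psi$ to the coefficients of $\gamma_{Y/X}(u)$. *)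

(* Defs.v *)
From HB Require Import structures.
From mathcomp Require Import all_boot all_order all_algebra all_fingroup all_solvable.
Set Implicit Arguments.
Unset Strict Implicit.
Unset Printing Implicit Defensive.
Import GRing.Theory.
Local Open Scope ring_scope.

(* A finite digraph (multiple edges and loops allowed): finite vertex set,
   finite edge set, origin map o = dsrc and terminus map t = dtgt. *)
Record digraph := Digraph {
  dvert : finType;
  dedge : finType;
  dsrc : dedge -> dvert;
  dtgt : dedge -> dvert }.

Definition dadj (X : digraph) : rel (dvert X) :=
  fun v w => [exists e : dedge X, (dsrc e == v) && (dtgt e == w)].

Definition strongly_connected (X : digraph) : Prop :=
  forall v w : dvert X, v != w -> connect (@dadj X) v w.

Section Cover.
Variables (X Y : digraph) (fv : dvert Y -> dvert X) (fe : dedge Y -> dedge X).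

Definition is_cover : Prop :=
  [/\ (forall e, dsrc (fe e) = fv (dsrc e) /\ dtgt (fe e) = fv (dtgt e)),
      (forall v : dvert X, exists w, fv w = v),
      (forall w : dvert Y,
          {in [pred e | dsrc e == w] &, injective fe} /\
          (forall e' : dedge X, dsrc e' = fv w -> exists2 e, dsrc e = w & fe e = e')) &
      (forall w : dvert Y,
          {in [pred e | dtgt e == w] &, injective fe} /\
          (forall e' : dedge X, dtgt e' = fv w -> exists2 e, dtgt e = w & fe e = e'))].

Definition autT := ({perm dvert Y} * {perm dedge Y})%type.

Definition is_aut_over (sg : autT) : bool :=
  [&& [forall e, (dsrc (sg.2 e) == sg.1 (dsrc e)) && (dtgt (sg.2 e) == sg.1 (dtgt e))],
      [forall w, fv (sg.1 w) == fv w] &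
      [forall e, fe (sg.2 e) == fe e]].

Definition Aut_set : {set autT} := [set sg | is_aut_over sg].

Lemma Aut_group_set : group_set Aut_set.
Proof.
apply/group_setP; split.
  rewrite inE; apply/and3P; split; apply/forallP => x /=; rewrite ?perm1 ?eqxx //.
move=> [s1 s2] [t1 t2]; rewrite !inE => /and3P[/forallP Hs /forallP Hs1 /forallP Hs2].
move=> /and3P[/forallP Ht /forallP Ht1 /forallP Ht2].
apply/and3P; split; apply/forallP => x /=; rewrite !permM.
- have /andP[/eqP a /eqP b] := Hs x; have /andP[/eqP c /eqP d] := Ht (s2 x).
  by rewrite c d a b !eqxx.
- by rewrite (eqP (Ht1 _)) (eqP (Hs1 _)).
- by rewrite (eqP (Ht2 _)) (eqP (Hs2 _)).
Qed.

Canonical Aut_group := Group Aut_group_set.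

Definition is_galois_cover : Prop :=
  [/\ is_cover, strongly_connected X, strongly_connected Y &
      forall w w' : dvert Y, fv w = fv w' -> exists2 sg, sg \in Aut_set & sg.1 w = w'].

Definition Gal : {group autT} := Aut_group.

Definition galT := subg_of Gal.

(* --- the group ring Z[G][u], realised as functions G -> Z[u] --- *)
Definition grone : {ffun galT -> {poly int}} := [ffun g : galT => ((g == 1%g)%:R : {poly int})].
Definition grmul (a b : {ffun galT -> {poly int}}) : {ffun galT -> {poly int}} :=
  [ffun g => \sum_(h : galT) a h * b (h^-1 * g)%g].

(* Given a section s of fv (one vertex in each fibre = a Z[G]-basis of Z V_Y),
   the matrix of I - A_Y u over Z[G][u]: entry (i, j) is the coefficient of
   s(i) in (I - A_Y u)(s(j)); the coefficient of g in A_Y(s j) at s i counts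
   the edges e with o(e) = s j and t(e) = g . s i. *)
Definition IAmx (s : dvert X -> dvert Y) (i j : dvert X) : {ffun galT -> {poly int}} :=
  [ffun g => ((i == j) && (g == 1%g))%:R%:P
       - 'X * (#|[set e : dedge Y | (dsrc e == s j) &&
                         (dtgt e == (sgval g : autT).1 (s i))]|%:R)%:P].

(* gamma_{Y/X}(u) = det_{Z[G][u]} (I - A_Y u), Leibniz formula *)
Definition gammaYX (s : dvert X -> dvert Y) : {ffun galT -> {poly int}} :=
  \sum_(p : {perm dvert X})
     [ffun g : galT => (-1) ^+ p * (\big[grmul/grone]_(i : dvert X) IAmx s i (p i)) g].

Definition is_character (F : fieldType) (psi : {ffun galT -> F}) : Prop :=
  (forall x y : galT, psi (x * y)%g = psi x * psi y) /\ (forall x, psi x != 0).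

Definition psi0 (F : fieldType) : {ffun galT -> F} := [ffun _ => 1].

Definition gYX (F : fieldType) (s : dvert X -> dvert Y) (psi : {ffun galT -> F}) : {poly F} :=
  \sum_(g : galT) psi g *: map_poly (fun z : int => z%:~R) (gammaYX s g).

End Cover.

(* g_X(u) = det(I - A_X u) in Z[u]; A_X(w) = sum_{o(e)=w} t(e) *)
Definition gpoly (X : digraph) : {poly int} :=
  \det (\matrix_(i < #|dvert X|, j < #|dvert X|)
          ((i == j)%:R%:P - 'X * (#|[set e : dedge X | (dsrc e == enum_val j) &&
                                      (dtgt e == enum_val i)]|%:R)%:P)).

(* Main.v *)
Require Import Defs.
From HB Require Import structures.
From mathcomp Require Import all_boot all_order all_algebra all_fingroup all_solvable.
From mathcomp Require Import mxrepresentation ring.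
Set Implicit Arguments.
Unset Strict Implicit.
Unset Printing Implicit Defensive.
Import GRing.Theory.
Local Open Scope ring_scope.


Section FDet.
Variable R : comRingType.

Definition fdet (T : finType) (a : T -> T -> R) : R :=
  \sum_(p : {perm T}) (-1) ^+ p * \prod_i a i (p i).

Section Conj.
Variables (T1 T2 : finType) (f : T1 -> T2) (g : T2 -> T1).
Hypotheses (fK : cancel f g) (gK : cancel g f).

Lemma cj_inj (p : {perm T2}) : injective (fun x => g (p (f x))).
Proof. by move=> x y /(can_inj gK) /perm_inj /(can_inj fK). Qed.

Definition cj (p : {perm T2}) : {perm T1} := perm (@cj_inj p).

Lemma cjE p x : cj p x = g (p (f x)).
Proof. by rewrite permE. Qed.

Lemma cjM p q : cj (p * q)%g = (cj p * cj q)%g.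
Proof. by apply/permP => x; rewrite permM !cjE permM gK. Qed.

Lemma cj1 : cj 1%g = 1%g.
Proof. by apply/permP => x; rewrite cjE !perm1 fK. Qed.

Lemma cj_tperm a b : cj (tperm a b) = tperm (g a) (g b).
Proof.
apply/permP => x; rewrite cjE.
case: (tpermP a b (f x)) => [Ea|Eb|/eqP Na /eqP Nb].
- by rewrite -Ea fK tpermL.
- by rewrite -Eb fK tpermR.
rewrite tpermD ?fK //.
  by apply: contra Na => /eqP <-; rewrite gK.
by apply: contra Nb => /eqP <-; rewrite gK.
Qed.

Lemma odd_cj p : odd_perm (cj p) = odd_perm p.
Proof.
case: (prod_tpermP p) => ts -> dts.
rewrite (big_morph cj cjM cj1).
rewrite odd_perm_prod //.
have -> : (\prod_(t <- ts) cj (tperm t.1 t.2))%g =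
   (\prod_(t <- map (fun t => (g t.1, g t.2)) ts) tperm t.1 t.2)%g.
  by rewrite big_map; apply: eq_bigr => t _; rewrite cj_tperm.
rewrite odd_perm_prod ?size_map //.
apply/allP => [[x y]] /mapP [[a b] /(allP dts) /= ab [-> ->]].
by rewrite /dpair /= (can_eq gK).
Qed.

Lemma cj_bij : bijective cj.
Proof.
have inj' (q : {perm T1}) : injective (fun y => f (q (g y))).
  by move=> x y /(can_inj fK) /perm_inj /(can_inj gK).
exists (fun q : {perm T1} => perm (inj' q)).
- by move=> p; apply/permP => y; rewrite permE cjE !gK.
- by move=> q; apply/permP => x; rewrite cjE permE !fK.
Qed.

Lemma fdet_bij (a : T2 -> T2 -> R) :
  fdet (fun x y => a (f x) (f y)) = fdet a.
Proof.
rewrite /fdet (reindex cj); last by apply: onW_bij; apply: cj_bij.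
apply: eq_bigr => p _; rewrite odd_cj; congr (_ * _).
rewrite (reindex g); last by apply: onW_bij; exists f.
by apply: eq_bigr => y _; rewrite cjE !gK.
Qed.
End Conj.

Lemma det_fdet n (A : 'M[R]_n) : \det A = fdet (fun i j => A i j).
Proof. by rewrite /fdet /determinant; unlock. Qed.

Lemma det_fdet_enum (T : finType) (a : T -> T -> R) :
  \det (\matrix_(i, j < #|T|) a (enum_val i) (enum_val j)) = fdet a.
Proof.
rewrite det_fdet.
rewrite -(@fdet_bij _ _ (@enum_val T _) (@enum_rank T) (@enum_valK T) (@enum_rankK T)).
apply: eq_bigr => p _; congr (_ * _); apply: eq_bigr => i _; by rewrite mxE.
Qed.

End FDet.


Section Block.
Variable R : comRingType.

Lemma det_castmx n1 n2 (e : n1 = n2) (A : 'M[R]_n1) : \det (castmx (e, e) A) = \det A.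
Proof. by case: n2 / e; rewrite castmx_id. Qed.

Lemma det_mxdiag K (p_ : 'I_K -> nat) (B : forall i, 'M[R]_(p_ i)) :
  \det (mxdiag B) = \prod_i \det (B i).
Proof.
elim: K p_ B => [|K IH] p_ B.
  rewrite [RHS]big_ord0.
  have H0 : forall n (e : n = 0%N) (M : 'M[R]_n), \det M = 1.
    by move=> n e M; subst n; exact: det_mx00.
  by apply: H0; rewrite big_ord0.
rewrite mxdiag_recl det_castmx det_ublock IH big_ord_recl.
done.
Qed.

Import tagnat.

Lemma fdet_block K (T : finType) (A : 'I_K -> T -> T -> R) :
  fdet (fun x y : 'I_K * T => if x.1 == y.1 then A x.1 x.2 y.2 else 0)
  = \prod_a fdet (A a).
Proof.
pose N := #|T|.
pose p_ := fun _ : 'I_K => N.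
pose B a : 'M[R]_(p_ a) := \matrix_(i, j < N) A a (enum_val i) (enum_val j).
have eqB : \prod_a \det (B a) = \prod_a fdet (A a).
  by apply: eq_bigr => a _; exact: det_fdet_enum.
rewrite -eqB -(det_mxdiag B).
rewrite det_fdet.
pose f := fun x : 'I_K * T => @Rank K p_ x.1 (enum_rank x.2).
pose g := fun s : 'I_(\sum_(i < K) p_ i) => (sig1 s, enum_val (sig2 s : 'I_N)).
have e2 a (k : 'I_N) : (sig2 (@Rank K p_ a k) : 'I_N) = k.
  by apply: val_inj; rewrite Rank2K.
have fK : cancel f g.
  by move=> [a x]; rewrite /f /g /= Rank1K e2 enum_rankK.
have gK : cancel g f.
  by move=> s; rewrite /f /g /= enum_valK sig2K.
rewrite -(fdet_bij fK gK (fun s t => mxdiag B s t)).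
apply: eq_bigr => p _; congr (_ * _); apply: eq_bigr => x _.
rewrite /f /mxdiag /mxblock mxE !Rank1K.
case: eqP => [E|_]; last by rewrite mxE.
rewrite conform_mx_id.
move: (p x) E => [b y] /= E.
by rewrite -E e2 mxE e2 !enum_rankK.
Qed.

End Block.

Section Mul.
Variable R : comRingType.

Lemma fdet_mul (T1 T2 : finType) (eT : #|T1| = #|T2|)
  (P : T2 -> T1 -> R) (B : T1 -> T1 -> R) (Q : T1 -> T2 -> R) :
  (forall x z, \sum_y P x y * Q y z = (x == z)%:R) ->
  fdet (fun x z => \sum_y \sum_w P x y * B y w * Q w z) = fdet B.
Proof.
move=> PQ.
pose N := #|T1|.
pose e1 : 'I_N -> T1 := enum_val.
pose r1 : T1 -> 'I_N := enum_rank.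
pose e2 : 'I_N -> T2 := fun i => enum_val (cast_ord eT i).
pose r2 : T2 -> 'I_N := fun x => cast_ord (esym eT) (enum_rank x).
have e1K : cancel e1 r1 by move=> i; rewrite /e1 /r1 enum_valK.
have r1K : cancel r1 e1 by move=> i; rewrite /e1 /r1 enum_rankK.
have e2K : cancel e2 r2 by move=> i; rewrite /e2 /r2 enum_valK cast_ordK.
have r2K : cancel r2 e2 by move=> i; rewrite /e2 /r2 cast_ordKV enum_rankK.
have sum1 (F : T1 -> R) : \sum_y F y = \sum_(l < N) F (e1 l).
  by rewrite (reindex e1) //; apply: onW_bij; exists r1.
pose MP : 'M[R]_N := \matrix_(i, j) P (e2 i) (e1 j).
pose MB : 'M[R]_N := \matrix_(i, j) B (e1 i) (e1 j).
pose MQ : 'M[R]_N := \matrix_(i, j) Q (e1 i) (e2 j).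
have hPQ : MP *m MQ = 1%:M.
  apply/matrixP => i j; rewrite !mxE.
  rewrite (eq_bigr (fun l => P (e2 i) (e1 l) * Q (e1 l) (e2 j))); last first.
    by move=> l _; rewrite !mxE.
  by rewrite -(sum1 (fun y => P (e2 i) y * Q y (e2 j))) PQ (can_eq e2K).
have dB : \det MB = fdet B.
  by rewrite det_fdet -(fdet_bij e1K r1K); apply: eq_bigr => p _;
     congr (_ * _); apply: eq_bigr => i _; rewrite mxE.
have dL : \det (MP *m MB *m MQ) =
    fdet (fun x z => \sum_y \sum_w P x y * B y w * Q w z).
  rewrite det_fdet -(fdet_bij e2K r2K); apply: eq_bigr => p _.
  congr (_ * _); apply: eq_bigr => i _.
  rewrite mxE exchange_big sum1; apply: eq_bigr => k _.
  rewrite !mxE mulr_suml sum1; apply: eq_bigr => l _; by rewrite !mxE.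
rewrite -dL -dB !det_mulmx.
have : \det MP * \det MQ = 1 by rewrite -det_mulmx hPQ det1.
move=> h; rewrite -[RHS]mul1r -h; ring.
Qed.
End Mul.


Section Chars.
Variables (F : fieldType) (gT : finGroupType).

Definition ischar (psi : {ffun gT -> F}) : Prop :=
  (forall x y : gT, psi (x * y)%g = psi x * psi y) /\ (forall x, psi x != 0).

Lemma char1 psi : ischar psi -> psi 1%g = 1.
Proof.
move=> [hM hN]; have := hM 1%g 1%g; rewrite mulg1 => h.
have /mulfI : psi 1%g != 0 by [].
by apply; rewrite mulr1 -h.
Qed.

Lemma charV psi x : ischar psi -> psi x^-1%g = (psi x)^-1.
Proof.
move=> hc; have [hM hN] := hc.
have := hM x x^-1%g; rewrite mulgV char1 // => h.
by apply: (mulfI (hN x)); rewrite -h mulfV.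
Qed.

Lemma char_orth psi phi : ischar psi -> ischar phi ->
  \sum_g psi g * (phi g)^-1 = if psi == phi then #|gT|%:R else 0.
Proof.
move=> hp hq; case: eqP => [<-|ne].
  rewrite (eq_bigr (fun _ => 1)) ?sumr_const //.
  by move=> g _; rewrite mulfV //; case: hp.
have [h nh] : exists h, psi h != phi h.
  apply/existsP; apply: contraT; rewrite negb_exists => /forallP H.
  by case: ne; apply/ffunP => x; have := H x; rewrite negbK => /eqP.
set S := \sum_g _.
have eS : S = psi h * (phi h)^-1 * S.
  rewrite {1}/S (reindex_inj (mulgI h)) /S mulr_sumr; apply: eq_bigr => g _.
  rewrite /= hp.1 hq.1 invfM; ring.
have : (1 - psi h * (phi h)^-1) * S = 0 by rewrite mulrBl mul1r -eS subrr.
move/eqP; rewrite mulf_eq0 => /orP[|/eqP //].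
rewrite subr_eq0 eq_sym => /eqP h1.
case/negP: nh; apply/eqP.
have nz : phi h != 0 by case: hq.
by rewrite -[phi h]mul1r -h1 mulfVK.
Qed.

End Chars.

Lemma sum_enum_val (R : nmodType) (T : finType) (f : T -> R) :
  \sum_(j < #|T|) f (enum_val j) = \sum_x f x.
Proof.
symmetry; rewrite (reindex (fun j : 'I_#|T| => enum_val j)) //.
by apply: onW_bij; exists enum_rank; [exact: enum_valK | exact: enum_rankK].
Qed.

Section Count.
Variables (F : closedFieldType) (gT : finGroupType).
Hypothesis comm : forall x y : gT, (x * y = y * x)%g.
Hypothesis F0 : [pchar F] =i pred0.

Lemma m_neq0 : (#|gT|%:R : F) != 0.
Proof.
by rewrite (pcharf0P F).1 //; apply/eqP => /card0_eq /(_ 1%g).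
Qed.

Lemma chars_le (chars : seq {ffun gT -> F}) : uniq chars ->
  (forall psi, psi \in chars -> ischar psi) -> (size chars <= #|gT|)%N.
Proof.
move=> uc hc.
set K := size chars.
pose chi (a : 'I_K) := chars`_a.
have chic (a : 'I_K) : ischar (chi a) by apply: hc; rewrite mem_nth.
pose MP : 'M[F]_(K, #|gT|) := \matrix_(a, j) chi a (enum_val j).
pose MQ : 'M[F]_(#|gT|, K) := \matrix_(j, b) (chi b (enum_val j))^-1.
have e : MP *m MQ = (#|gT|%:R)%:M.
  apply/matrixP => a b; rewrite !mxE.
  rewrite (eq_bigr (fun j => chi a (enum_val j) * (chi b (enum_val j))^-1)); last first.
    by move=> j _; rewrite !mxE.
  rewrite (sum_enum_val (fun g => chi a g * (chi b g)^-1)) char_orth //.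
  by rewrite /chi nth_uniq // -val_eqE /=; case: eqP.
have : \rank (MP *m MQ) = K.
  rewrite e mxrank_unit // unitmxE det_scalar unitfE expf_neq0 //.
  exact: m_neq0.
move=> <-; apply: leq_trans (mxrankM_maxl _ _) _; exact: rank_leq_col.
Qed.

Lemma chars_ge (chars : seq {ffun gT -> F}) :
  (forall psi, ischar psi -> psi \in chars) -> (#|gT| <= size chars)%N.
Proof.
move=> hc.
pose G := [set: gT]%G.
have cGG : abelian G by apply/centsP => x _ y _; exact: comm.
have F'G : ([pchar F]^'.-group G)%g.
  by apply/pgroupP => p pr _; rewrite inE /= F0.
have splitG : group_splitting_field F G.
  by move=> n rG irrG; apply: group_closure_closed_field.
apply: (socle_exists (regular_repr F G)) => sG.
have ZG x : x \in 'Z(G)%g by rewrite (center_idP cGG) inE.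
pose psiW (W : sG) := [ffun x : gT => irr_mode W x].
have psic W : ischar (psiW W).
  split => [x y|x]; rewrite !ffunE; first by rewrite irr_modeM.
  exact: irr_mode_neq0.
have injW : injective psiW.
  move=> V W /ffunP eqVW.
  rewrite -(irr_reprK_pchar F'G V) -(irr_reprK_pchar F'G W).
  have scalX (U : sG) x : x \in G -> irr_repr U x = (irr_mode U x)%:M.
    by move=> _; apply: irr_center_scalar.
  move: (irr_repr V) (irr_repr W) (scalX V) (scalX W).
  rewrite !(irr_degree_abelian splitG cGG) => rV rW hV hW.
  apply: irr_comp_rsim_pchar => //.
  exists 1%:M; rewrite ?row_free_unit ?unitmx1 // => x Gx.
  by rewrite mulmx1 mul1mx hV // hW //; have := eqVW x; rewrite !ffunE => ->.
have : #|sG| = #|gT|.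
  rewrite card_irr_pchar //; apply/eqP; have := card_classes_abelian G.
  by rewrite cGG cardsT => /esym.
move=> <-; rewrite cardE -(size_map psiW).
apply: uniq_leq_size; first by rewrite map_inj_uniq ?enum_uniq.
by move=> _ /mapP [W _ ->]; apply: hc.
Qed.

End Count.


Section Graph.
Variables (X Y : digraph) (fv : dvert Y -> dvert X) (fe : dedge Y -> dedge X).

Local Notation Gt := (galT fv fe).

Definition act (g : Gt) (w : dvert Y) : dvert Y := (sgval g : autT Y).1 w.
Definition acte (g : Gt) (e : dedge Y) : dedge Y := (sgval g : autT Y).2 e.

Lemma autP (g : Gt) :
  [/\ forall e, dsrc (acte g e) = act g (dsrc e) /\ dtgt (acte g e) = act g (dtgt e),
      forall w, fv (act g w) = fv w &
      forall e, fe (acte g e) = fe e].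
Proof.
have := subgP g; rewrite inE /is_aut_over => /and3P [/forallP H1 /forallP H2 /forallP H3].
split => [e|w|e].
- by have /andP [/eqP -> /eqP ->] := H1 e.
- exact/eqP/H2.
- exact/eqP/H3.
Qed.

Lemma pm1 (a b : autT Y) : (a * b)%g.1 = (a.1 * b.1)%g. Proof. by []. Qed.
Lemma pm2 (a b : autT Y) : (a * b)%g.2 = (a.2 * b.2)%g. Proof. by []. Qed.
Lemma p1 : (1%g : autT Y).1 = 1%g. Proof. by []. Qed.
Lemma p2 : (1%g : autT Y).2 = 1%g. Proof. by []. Qed.

Lemma actM g h w : act (g * h)%g w = act h (act g w).
Proof. by rewrite /act sgvalM ?inE // pm1 permM. Qed.

Lemma act1 w : act 1%g w = w.
Proof. by rewrite /act (_ : sgval 1%g = 1%g) // p1 perm1. Qed.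

Lemma acteM g h e : acte (g * h)%g e = acte h (acte g e).
Proof. by rewrite /acte sgvalM ?inE // pm2 permM. Qed.

Lemma actK g w : act g^-1%g (act g w) = w.
Proof. by rewrite -actM mulgV act1. Qed.

Hypothesis hG : is_galois_cover fv fe.

Lemma act_free g w : act g w = w -> g = 1%g.
Proof.
case: hG => [[hinc hsurj hsrc htgt] _ hscY _] Hw.
have fixE e : act g (dsrc e) = dsrc e -> acte g e = e.
  move=> H; have [inj _] := hsrc (dsrc e); apply: inj; rewrite ?inE //.
    by have [h1 _ _] := autP g; rewrite (h1 e).1 H.
  by have [_ _ h3] := autP g; rewrite h3.
have fixV v : act g v = v.
  case: (eqVneq w v) => [<-//|ne].
  have /connectP [p pth ->] := hscY w v ne.
  elim: p w Hw pth {ne} => //= x p IH w Hw /andP [adj pth].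
  apply: IH pth.
  case/existsP: adj => e /andP [/eqP es /eqP et].
  have he := fixE e; rewrite es in he; have := he Hw.
  have [h1 _ _] := autP g.
  by rewrite -et -(h1 e).2 => ->.
apply: (can_inj sgvalK).
have e1 : (sgval g).1 = 1%g by apply/permP => v; rewrite perm1; exact: fixV.
have e2 : (sgval g).2 = 1%g.
  by apply/permP => e; rewrite perm1; apply: fixE; exact: fixV.
rewrite (_ : sgval 1%g = 1%g) //.
by move: e1 e2; case: (sgval g) => a b /= -> ->.
Qed.

Lemma act_inj_g w : injective (act^~ w).
Proof.
move=> g h /= e.
have : act (g * h^-1)%g w = w by rewrite actM e -actM mulgV act1.
by move/act_free => /(congr1 (mulg^~ h)); rewrite -mulgA mulVg mulg1 mul1g.
Qed.

Definition ecount (w w' : dvert Y) :=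
  #|[set e : dedge Y | (dsrc e == w) && (dtgt e == w')]|.

Lemma acteK g e : acte g^-1%g (acte g e) = e.
Proof. by rewrite -acteM mulgV /acte (_ : sgval 1%g = 1%g) // p2 perm1. Qed.
Lemma acteKV g e : acte g (acte g^-1%g e) = e.
Proof. by rewrite -acteM mulVg /acte (_ : sgval 1%g = 1%g) // p2 perm1. Qed.
Lemma actKV g w : act g (act g^-1%g w) = w.
Proof. by rewrite -actM mulVg act1. Qed.

Lemma ecount_act g w w' : ecount (act g w) (act g w') = ecount w w'.
Proof.
rewrite /ecount; symmetry; rewrite -(card_imset _ (can_inj (acteK g))).
apply: eq_card => e; rewrite [in RHS]inE.
have [h1 _ _] := autP g.
apply/imsetP/andP => [[e0]|[/eqP a /eqP b]]; last first.
  exists (acte g^-1%g e); last by rewrite acteKV.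
  have [h1' _ _] := autP g^-1%g.
  by rewrite inE (h1' _).1 (h1' _).2 a b !actK !eqxx.
rewrite inE => /andP [/eqP a /eqP b] ->.
by rewrite (h1 _).1 (h1 _).2 a b.
Qed.

Variable s : dvert X -> dvert Y.
Hypothesis hs : forall v, fv (s v) = v.

Definition phi (x : Gt * dvert X) := act x.1 (s x.2).
Definition phinv (w : dvert Y) : Gt * dvert X :=
  (odflt 1%g [pick g | act g (s (fv w)) == w], fv w).

Lemma phiK : cancel phi phinv.
Proof.
move=> [g i]; rewrite /phi /phinv /=.
have [_ h2 _] := autP g; rewrite h2 hs.
case: pickP => [g' /eqP e|/(_ g)]; last by rewrite eqxx.
by rewrite (act_inj_g e).
Qed.

Lemma phinvK : cancel phinv phi.
Proof.
move=> w; rewrite /phi /phinv /=.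
case: pickP => [g' /eqP //|none].
case: hG => _ _ _ /(_ (s (fv w)) w); rewrite hs => /(_ erefl) [sg sgA e].
have Gsg : sg \in Gal fv fe by [].
have := none (subg (Gal fv fe) sg); rewrite /act subgK // e eqxx //.
Qed.

Lemma ecount_phi g i h j :
  ecount (act h (s j)) (act g (s i)) = ecount (s j) (act (g * h^-1)%g (s i)).
Proof.
by rewrite -(ecount_act h^-1%g) actK -actM.
Qed.

Lemma sum_act_ind (w : dvert Y) i :
  (\sum_k (w == act k (s i)) = (fv w == i))%N.
Proof.
case: (eqVneq (fv w) i) => [e|ne].
  have e0 : act (phinv w).1 (s i) = w by rewrite -{2}(phinvK w) /phi /phinv /= e.
  rewrite (bigD1 (phinv w).1) // e0 eqxx big1 // => k nk.
  case: eqP => // ek; case/eqP: nk; apply: (@act_inj_g (s i)).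
  by rewrite /= e0 -ek.
rewrite big1 // => k _; case: eqP => // ek; case/eqP: ne.
by rewrite ek; have [_ -> _] := autP k; rewrite hs.
Qed.

Lemma sum_count i j :
  (\sum_k ecount (s j) (act k (s i)) =
   #|[set e : dedge X | (dsrc e == j) && (dtgt e == i)]|)%N.
Proof.
case: hG => [[hinc hsurj hsrc htgt] _ _ _].
pose SX := [set e : dedge Y | (dsrc e == s j) && (fv (dtgt e) == i)].
have -> : (\sum_k ecount (s j) (act k (s i)) = #|SX|)%N.
  have cnt (P : pred (dedge Y)) : #|[set e | P e]| = (\sum_e P e)%N.
    rewrite -sum1_card big_mkcond /=; apply: eq_bigr => e _.
    by rewrite inE; case: (P e).
  rewrite /ecount; under eq_bigr do rewrite cnt.
  rewrite cnt exchange_big /=; apply: eq_bigr => e _.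
  case: (dsrc e == s j) => /=; first exact: sum_act_ind.
  by rewrite big1.
rewrite -(card_in_imset (f := fe)).
  apply: eq_card => e'; rewrite inE.
  apply/imsetP/andP => [[e]|[/eqP a /eqP b]].
    rewrite inE => /andP [/eqP a /eqP b] ->.
    by rewrite (hinc e).1 (hinc e).2 a b hs !eqxx.
  have [_ sur] := hsrc (s j); have [|e ea eb] := sur e'; first by rewrite hs.
  exists e; last by [].
  by rewrite inE ea eqxx -(hinc e).2 eb b /=.
move=> e1 e2; rewrite !inE => /andP [/eqP a1 _] /andP [/eqP a2 _].
have [inj _] := hsrc (s j); apply: inj; by rewrite inE; apply/eqP.
Qed.

End Graph.


Section PhiSec.
Variables (X Y : digraph) (fv : dvert Y -> dvert X) (fe : dedge Y -> dedge X).
Local Notation Gt := (galT fv fe).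
Variables (F : fieldType) (psi : {ffun Gt -> F}).
Hypothesis hpsi : ischar psi.

Definition mp (p : {poly int}) : {poly F} := map_poly (fun z : int => z%:~R) p.

Definition Phi (a : {ffun Gt -> {poly int}}) : {poly F} := \sum_g psi g *: mp (a g).

Lemma PhiD a b : Phi (a + b) = Phi a + Phi b.
Proof.
rewrite /Phi -big_split /=; apply: eq_bigr => g _.
by rewrite ffunE /mp rmorphD scalerDr.
Qed.

Lemma Phi0 : Phi 0 = 0.
Proof. by rewrite /Phi big1 // => g _; rewrite ffunE /mp rmorph0 scaler0. Qed.

Lemma Phi_sum (I : Type) (r : seq I) (f : I -> {ffun Gt -> {poly int}}) :
  Phi (\sum_(i <- r) f i) = \sum_(i <- r) Phi (f i).
Proof. exact: (big_morph Phi PhiD Phi0). Qed.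

Lemma PhiMc c (a : {ffun Gt -> {poly int}}) :
  Phi [ffun g => c * a g] = mp c * Phi a.
Proof.
rewrite /Phi mulr_sumr; apply: eq_bigr => g _.
by rewrite ffunE /mp rmorphM scalerAr.
Qed.

Lemma PhiM a b : Phi (grmul a b) = Phi a * Phi b.
Proof.
rewrite /Phi /grmul.
under eq_bigr do rewrite ffunE /mp rmorph_sum scaler_sumr.
rewrite exchange_big mulr_suml; apply: eq_bigr => h _.
rewrite mulr_sumr [RHS](reindex_inj (mulgI h^-1)%g) /=.
apply: eq_bigr => g _.
by rewrite rmorphM -scalerAl -scalerAr scalerA -hpsi.1 mulKVg.
Qed.

Lemma Phi1 : Phi (grone fv fe) = 1.
Proof.
have p1 := char1 hpsi.
rewrite /Phi (bigD1 1%g) //= big1 ?addr0.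
  by rewrite ffunE eqxx /mp rmorph1 p1 scale1r.
by move=> g /negbTE ng; rewrite ffunE ng /mp rmorph0 scaler0.
Qed.

Lemma Phi_prod (T : finType) (f : T -> {ffun Gt -> {poly int}}) :
  Phi (\big[@grmul _ _ fv fe/grone fv fe]_i f i) = \prod_i Phi (f i).
Proof. exact: (big_morph Phi PhiM Phi1). Qed.

Lemma Phi_IA (s : dvert X -> dvert Y) i j :
  Phi (IAmx fv fe s i j) = ((i == j)%:R)%:P
     - 'X * (\sum_g psi g * (ecount (s j) (act g (s i)))%:R)%:P.
Proof.
have p1 := char1 hpsi.
rewrite /Phi.
under eq_bigr do rewrite ffunE /mp rmorphB rmorphM /= map_polyC map_polyX
   map_polyC /= !rmorph_nat scalerBr -!mul_polyC.
rewrite sumrB; congr (_ - _).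
  rewrite (bigD1 1%g) //= big1 ?addr0.
    by rewrite eqxx andbT p1 polyC1 mul1r polyC_natr.
  by move=> g /negbTE ng; rewrite ng andbF mulr0.
rewrite rmorph_sum mulr_sumr; apply: eq_bigr => g _.
by rewrite [in RHS]rmorphM /= polyC_natr /ecount /act; ring.
Qed.

Lemma gYX_fdet (s : dvert X -> dvert Y) :
  gYX s psi = fdet (fun i j => Phi (IAmx fv fe s i j)).
Proof.
rewrite /gYX /fdet -/(Phi (gammaYX fv fe s)) /gammaYX Phi_sum.
apply: eq_bigr => p _; rewrite PhiMc Phi_prod.
by rewrite /mp rmorphXn rmorphN1.
Qed.

End PhiSec.


Lemma fdet_ext (R : comRingType) (T : finType) (a b : T -> T -> R) :
  (forall x y, a x y = b x y) -> fdet a = fdet b.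
Proof.
move=> e; apply: eq_bigr => p _; congr (_ * _); apply: eq_bigr => i _; exact: e.
Qed.

Lemma conj_entry (F : fieldType) (T T2 : finType) (P : T2 -> T -> F)
  (Q : T -> T2 -> F) (M : T -> T -> F) x z :
  \sum_y \sum_w (P x y)%:P * (((y == w)%:R)%:P - 'X * (M y w)%:P) * (Q w z)%:P =
  (\sum_y P x y * Q y z)%:P - 'X * (\sum_y \sum_w P x y * M y w * Q w z)%:P.
Proof.
rewrite !rmorph_sum mulr_sumr -sumrB; apply: eq_bigr => y _.
have h w : (P x y)%:P * (((y == w)%:R)%:P - 'X * (M y w)%:P) * (Q w z)%:P =
    ((y == w)%:R * (P x y * Q w z))%:P - 'X * (P x y * M y w * Q w z)%:P.
  by rewrite !rmorphM /= polyC_natr; ring.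
rewrite (eq_bigr _ (fun w _ => h w)) sumrB; congr (_ - _).
  rewrite -rmorph_sum; congr (_%:P).
  rewrite (bigD1 y) //= eqxx mul1r big1 ?addr0 // => w nw.
  by rewrite eq_sym (negbTE nw) mul0r.
by rewrite rmorph_sum mulr_sumr.
Qed.

Lemma sum_pair (R : nmodType) (T1 T2 : finType) (f : T1 * T2 -> R) :
  \sum_y f y = \sum_a \sum_b f (a, b).
Proof. by rewrite pair_big; apply: eq_bigr => [[a b]]. Qed.

Lemma sum_delta (R : comRingType) (T : finType) (i : T) (f : T -> R) :
  \sum_k (i == k)%:R * f k = f i.
Proof.
rewrite (bigD1 i) //= eqxx mul1r big1 ?addr0 // => k nk.
by rewrite eq_sym (negbTE nk) mul0r.
Qed.

Theorem theorem3p13 (X Y : digraph) (fv : dvert Y -> dvert X) (fe : dedge Y -> dedge X)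
  (F : closedFieldType) :
  is_galois_cover fv fe ->
  abelian (Gal fv fe) ->
  [pchar F] =i pred0 ->
  forall s : dvert X -> dvert Y, (forall v, fv (s v) = v) ->
  forall chars : seq {ffun galT fv fe -> F},
    uniq chars ->
    (forall psi, psi \in chars <-> is_character psi) ->
    map_poly (fun z : int => z%:~R) (gpoly Y) =
      map_poly (fun z : int => z%:~R) (gpoly X) *
      \prod_(psi <- chars | psi != psi0 fv fe F) gYX s psi.
Proof.
move=> hG cGal F0 s hs chars uc hc.
have comm : forall x y : galT fv fe, (x * y = y * x)%g.
  move=> x y; apply: (can_inj sgvalK); rewrite !sgvalM ?inE //.
  exact: (centsP cGal) _ (subgP x) _ (subgP y).
have hc' psi : psi \in chars <-> ischar psi := hc psi.
have eK : size chars = #|galT fv fe|.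
  apply/eqP; rewrite eqn_leq; apply/andP; split.
    by apply: chars_le => // psi /hc'.
  by apply: chars_ge => // psi /hc'.
set K := size chars in eK *.
pose chi (a : 'I_K) := nth (psi0 fv fe F) chars a.
have chic a : ischar (chi a) by apply/hc'; rewrite mem_nth.
have chi_eq a b : (chi a == chi b) = (a == b) by rewrite nth_uniq.
pose m := #|galT fv fe|.
pose N (k l : dvert X) (c : galT fv fe) : F := (ecount (s l) (act c (s k)))%:R.
pose aY (x y : dvert Y) : {poly F} :=
  ((x == y)%:R)%:P - 'X * ((ecount y x)%:R)%:P.
pose aps (psi : {ffun galT fv fe -> F}) i j := Phi psi (IAmx fv fe s i j).
have psi0c : ischar (psi0 fv fe F).
  by split => [x y|x]; rewrite !ffunE ?mulr1 ?oner_neq0.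
have hL : map_poly (fun z : int => z%:~R) (gpoly Y) = fdet aY.
  rewrite /gpoly -det_map_mx -det_fdet_enum; congr (\det _).
  apply/matrixP => i j; rewrite !mxE /aY (inj_eq enum_val_inj) /ecount.
  by rewrite rmorphB rmorphM /= map_polyC map_polyX map_polyC /= !rmorph_nat.
have hX : map_poly (fun z : int => z%:~R) (gpoly X) = fdet (aps (psi0 fv fe F)).
  rewrite /gpoly -det_map_mx -det_fdet_enum; congr (\det _).
  apply/matrixP => i j; rewrite !mxE /aps Phi_IA //.
  rewrite rmorphB rmorphM /= map_polyC map_polyX map_polyC /= !rmorph_nat.
  rewrite (inj_eq enum_val_inj); congr (_ - _ * _); rewrite -polyC_natr; congr (_%:P).
  rewrite (eq_bigr (fun g => (ecount (s (enum_val j)) (act g (s (enum_val i))))%:R)).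
    by rewrite -natr_sum (sum_count hG hs).
  by move=> g _; rewrite ffunE mul1r.
have hR : \prod_(psi <- chars | psi != psi0 fv fe F) gYX s psi =
          \prod_(psi <- chars | psi != psi0 fv fe F) fdet (aps psi).
  rewrite big_seq_cond [RHS]big_seq_cond; apply: eq_bigr => psi /andP [/hc' cp _].
  exact: gYX_fdet.
rewrite hL hR hX -(@bigD1_seq _ _ _ _ _ _ (fun psi => fdet (aps psi))) //; last first.
  by apply/hc'.
rewrite (big_nth (psi0 fv fe F)) -/K big_mkord.
rewrite -(fdet_block (fun a : 'I_K => aps (chi a))).
rewrite -(fdet_bij (phiK hG hs) (phinvK hG hs) aY).
have m0 : (m%:R : F) != 0 by apply: m_neq0.
pose P (x : 'I_K * dvert X) (y : galT fv fe * dvert X) : F :=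
  (x.2 == y.2)%:R * chi x.1 y.1.
pose Q (y : galT fv fe * dvert X) (z : 'I_K * dvert X) : F :=
  (y.2 == z.2)%:R * ((m%:R)^-1 * (chi z.1 y.1)^-1).
pose Mb (y w : galT fv fe * dvert X) : F := N y.2 w.2 (y.1 * w.1^-1)%g.
have hB y w : aY (phi s y) (phi s w) =
    ((y == w)%:R)%:P - 'X * (Mb y w)%:P.
  rewrite /aY (inj_eq (can_inj (phiK hG hs))); congr (_ - 'X * (_%:R)%:P).
  by rewrite /phi ecount_phi.
have S1 x z : \sum_y P x y * Q y z = (x == z)%:R.
  case: x z => a i [b j]; rewrite sum_pair.
  have -> : \sum_g \sum_k P (a, i) (g, k) * Q (g, k) (b, j) =
      \sum_g (i == j)%:R * ((m%:R)^-1 * (chi a g * (chi b g)^-1)).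
    apply: eq_bigr => g _; rewrite /P /Q /=.
    rewrite (eq_bigr (fun k => (i == k)%:R * ((k == j)%:R * (chi a g * ((m%:R)^-1 * (chi b g)^-1))))).
      by rewrite sum_delta; ring.
    by move=> k _; ring.
  rewrite -mulr_sumr -mulr_sumr char_orth // chi_eq xpair_eqE.
  by case: (a == b); case: (i == j); rewrite /= ?mulr0 ?mul0r ?mul1r ?mulVf.
have S2 x z : \sum_y \sum_w P x y * Mb y w * Q w z =
    (x.1 == z.1)%:R * \sum_c chi x.1 c * N x.2 z.2 c.
  case: x z => a i [b j] /=.
  have e1 : \sum_y \sum_w P (a, i) y * Mb y w * Q w (b, j) =
      \sum_g \sum_h chi a g * N i j (g * h^-1)%g * ((m%:R)^-1 * (chi b h)^-1).
    rewrite sum_pair; apply: eq_bigr => g _.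
    transitivity (\sum_k (i == k)%:R * (\sum_h chi a g * N k j (g * h^-1)%g * ((m%:R)^-1 * (chi b h)^-1))).
      apply: eq_bigr => k _; rewrite sum_pair mulr_sumr; apply: eq_bigr => h _.
      rewrite (eq_bigr (fun l => (j == l)%:R * (P (a, i) (g, k) * Mb (g, k) (h, l) * ((m%:R)^-1 * (chi b h)^-1)))).
        by rewrite sum_delta /P /Mb /=; ring.
      by move=> l _; rewrite /Q /= eq_sym; ring.
    by rewrite sum_delta.
  rewrite e1 exchange_big /=.
  transitivity (\sum_h \sum_c chi a c * N i j c * (chi a h * ((m%:R)^-1 * (chi b h)^-1))).
    apply: eq_bigr => h _; rewrite (reindex_inj (mulIg h)) /=; apply: eq_bigr => c _.
    by rewrite mulgK (chic a).1; ring.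
  rewrite exchange_big /=.
  under eq_bigr do rewrite -mulr_sumr.
  rewrite -mulr_suml mulrC.
  rewrite (eq_bigr (fun h => (m%:R)^-1 * (chi a h * (chi b h)^-1))); last by move=> h _; ring.
  rewrite -mulr_sumr char_orth // chi_eq.
  by case: (a == b); rewrite ?mulr0 ?mul0r // mulVf // mul1r.
symmetry.
have eT : #|{: galT fv fe * dvert X}| = #|{: 'I_K * dvert X}|.
  by rewrite !card_prod card_ord eK.
rewrite -(@fdet_mul _ (galT fv fe * dvert X)%type ('I_K * dvert X)%type eT
   (fun x y => (P x y)%:P) (fun y w => aY (phi s y) (phi s w))
   (fun y z => (Q y z)%:P)).
- apply: fdet_ext => x z.
  rewrite (eq_bigr (fun y => \sum_w (P x y)%:P * (((y == w)%:R)%:P - 'X * (Mb y w)%:P) * (Q w z)%:P)); last first.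
    by move=> y _; apply: eq_bigr => w _; rewrite hB.
  rewrite conj_entry S1 S2 /aps Phi_IA //.
  case: x z => a i [b j] /=; rewrite xpair_eqE.
  case: (a == b) => /=; last by rewrite mul0r polyC0 mulr0 subr0.
  by rewrite mul1r.
- move=> x z.
  rewrite (eq_bigr (fun y => (P x y * Q y z)%:P)); last first.
    by move=> y _; rewrite -polyCM.
  by rewrite -rmorph_sum S1 rmorph_nat.
Qed.
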